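(* Let $d<n$ be positive integers and let $r\in\{0,1\}$ with $d\equiv r \pmod 2$. For every family $\mathcal{A}\subset 2^{[n]}$ with $\mathrm{VC}(\mathcal{A}\triangle\mathcal{A})\le d$, we have $|\mathcal{A}|\le 2^r\binom{n-r}{\le \lfloor d/2\rfloor}$.
   Context: $[n]=\{1,\dots,n\}$. For $Y\subset[n]$, $Y$ is shattered by $\mathcal{F}\subset 2^{[n]}$ if $\{S\cap Y: S\in\mathcal{F}\}=2^Y$; $\mathrm{VC}(\mathcal{F})$ is the largest cardinality of a set shattered by $\mathcal{F}$. $\mathcal{A}\triangle\mathcal{A}=\{S\triangle T: S,T\in\mathcal{A}\}$, where $\triangle$ is symmetric difference. $\binom{m}{\le t}=\sum_{j=0}^{t}\binom{m}{j}$. *)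

(* Defs.v *)
(* Ground set [n] is modelled by 'I_n (indices 0..n-1). *)
From mathcomp Require Import all_boot.
Set Implicit Arguments. Unset Strict Implicit. Unset Printing Implicit Defensive.

Definition symd (T : finType) (S U : {set T}) : {set T} := (S :\: U) :|: (U :\: S).

Definition symd_fam (T : finType) (A : {set {set T}}) : {set {set T}} :=
  [set symd S U | S in A, U in A].

Definition shattered (T : finType) (F : {set {set T}}) (Y : {set T}) : bool :=
  [set S :&: Y | S in F] == powerset Y.

(* VC dimension: largest cardinality of a shattered set (0 if none is shattered,
   which only happens for the empty family). *)
Definition VC (T : finType) (F : {set {set T}}) : nat :=
  \max_(Y : {set T} | shattered F Y) #|Y|.

Definition binom_le (m t : nat) : nat := \sum_(0 <= j < t.+1) 'C(m, j).

(* Main.v *)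
Require Import Defs.
From mathcomp Require Import all_boot zify.
Set Implicit Arguments. Unset Strict Implicit. Unset Printing Implicit Defensive.

Lemma bl_pascal a t : binom_le a.+1 t.+1 = binom_le a t.+1 + binom_le a t.
Proof.
rewrite /binom_le; elim: t => [|t IH].
  rewrite !big_nat_recr //= !big_geq // !bin0 !bin1; lia.
rewrite (big_nat_recr t.+2) //= IH binS.
rewrite (big_nat_recr t.+2 0 (fun j => 'C(a, j))) //=.
rewrite (big_nat_recr t.+1 0 (fun j => 'C(a, j))) //=.
lia.
Qed.

Lemma bl_mid t : 2 * binom_le t.*2.+1 t = 2 ^ t.*2.+1.
Proof.
have full : \sum_(0 <= j < t.*2.+2) 'C(t.*2.+1, j) = 2 ^ t.*2.+1.
  have := expnDn 1 1 t.*2.+1; rewrite addn1 => ->.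
  rewrite big_mkord; apply: eq_bigr => i _; by rewrite !exp1n !muln1.
rewrite -full (big_cat_nat _ (n := t.+1)) //=; last by rewrite -addnn; lia.
rewrite mul2n -addnn; congr (_ + _).
rewrite /binom_le big_nat_rev /=.
have -> : t.*2.+2 = t.+1 + t.+1 by rewrite -addnn; lia.
rewrite (big_addn 0 (t.+1 + t.+1) t.+1) addnK.
apply: eq_big_nat => i /andP [_ hi].
rewrite -bin_sub; last by rewrite -addnn; lia.
congr 'C(_, _); rewrite -addnn; lia.
Qed.

Definition K (m d : nat) : nat :=
  if odd d then 2 * binom_le m.-1 d./2 else binom_le m d./2.

Lemma Krec k d : 2 <= d -> d < k -> K k.+1 d = K k d + K k (d - 2).
Proof.
case: d => [|[|s]] // _ hk; have -> : s.+2 - 2 = s by lia.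
rewrite /K /= negbK.
have -> : k = (k.-1).+1 by lia.
case: (odd s).
- have -> : k.-1 = (k.-2).+1 by lia.
  by rewrite /= -mulnDr bl_pascal.
- by rewrite bl_pascal.
Qed.

Lemma Ksmall k d : d < 2 -> K k d <= K k.+1 d.
Proof. by case: d => [|[|]] //; rewrite /K /= /binom_le !big_nat1 !bin0. Qed.

Lemma Kfull k : K k.+1 k = 2 ^ k.
Proof.
rewrite /K; case/boolP: (odd k) => ok.
- have [t ->] : exists t, k = t.*2.+1 by exists k./2; rewrite -[k in LHS]odd_double_half ok.
  by rewrite /= uphalf_double bl_mid.
- have [t ->] : exists t, k = t.*2 by exists k./2; rewrite -[k in LHS]odd_double_half (negbTE ok).
  rewrite doubleK.
  have := bl_mid t; rewrite expnS => /eqP; rewrite eqn_mul2l /= => /eqP.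
  done.
Qed.
Section Down.
Variable T : finType.
Implicit Types (A D F : {set {set T}}) (S U Y W : {set T}).

Lemma shatteredP F Y :
  reflect (forall W, W \subset Y -> exists2 U, U \in F & U :&: Y = W) (shattered F Y).
Proof.
apply: (iffP eqP) => [H W sW | H].
  have : W \in powerset Y by rewrite powersetE.
  by rewrite -H => /imsetP [U hU ->]; exists U.
apply/setP => W; rewrite powersetE; apply/imsetP/idP => [[U _ ->]|sW].
  exact: subsetIr.
by have [U hU <-] := H W sW; exists U.
Qed.

Lemma in_symd S U y : (y \in symd S U) = (y \in S) (+) (y \in U).
Proof. by rewrite /symd !inE; case: (y \in S); case: (y \in U). Qed.

Lemma symdC S U : symd S U = symd U S.
Proof. by apply/setP => y; rewrite !in_symd addbC. Qed.

Lemma symdI S U Y : symd S U :&: Y = symd (S :&: Y) (U :&: Y).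
Proof.
apply/setP => y; rewrite in_setI !in_symd !in_setI.
by case: (y \in S); case: (y \in U); case: (y \in Y).
Qed.

Lemma shVC F Y : shattered F Y -> #|Y| <= VC F.
Proof. move=> h; rewrite /VC; exact: (leq_bigmax_cond (F := fun Y : {set T} => #|Y|) _ h). Qed.

Definition dsh (i : T) D S := if (i \in S) && (S :\ i \notin D) then S :\ i else S.
Definition dcomp i D := [set dsh i D S | S in D].

Lemma dsh_inj i D : {in D &, injective (dsh i D)}.
Proof.
move=> S U hS hU; rewrite /dsh.
case: (boolP ((i \in S) && (S :\ i \notin D))) => [/andP [iS nS]|_];
case: (boolP ((i \in U) && (U :\ i \notin D))) => [/andP [iU nU]|_] //.
- move=> e; apply/setP => y; have := (iffRL (setP _ _) e y); rewrite /= !inE.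
  by case: (eqVneq y i) => [->|] //=; rewrite iS iU.
- by move=> e; move: nS; rewrite e hU.
- by move=> e; move: nU; rewrite -e hS.
Qed.

Lemma card_dcomp i D : #|dcomp i D| = #|D|.
Proof. exact/card_in_imset/dsh_inj. Qed.

Lemma dsh_sub i D S : dsh i D S \subset S.
Proof. by rewrite /dsh; case: ifP => _ //; exact: subD1set. Qed.

Definition wt D := \sum_(S in D) #|S|.

Lemma wt_dcomp i D S0 : S0 \in D -> i \in S0 -> S0 :\ i \notin D -> wt (dcomp i D) < wt D.
Proof.
move=> h0 i0 n0; rewrite /wt /dcomp big_imset; last exact: dsh_inj.
rewrite (bigD1 S0) //= [in X in _ < X](bigD1 S0) //=.
rewrite -addSn leq_add //.
  by rewrite /dsh i0 n0 /= [in X in _ < X](cardsD1 i) i0.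
by apply: leq_sum => S _; apply: subset_leq_card; apply: dsh_sub.
Qed.

Lemma dsh_in i D S : i \in dsh i D S -> dsh i D S = S /\ (S :\ i \in D).
Proof.
rewrite /dsh; case: ifP => [_|]; first by rewrite !inE eqxx.
by move/negbT; rewrite negb_and negbK => /orP [/negbTE ->| ->].
Qed.

Lemma dsh_off i D S y : y != i -> (y \in dsh i D S) = (y \in S).
Proof. by move=> ne; rewrite /dsh; case: ifP => // _; rewrite !inE ne. Qed.

Lemma core i D Y W S0 T0 : S0 \in D -> T0 \in D -> i \in dsh i D S0 -> i \notin dsh i D T0 ->
  symd (dsh i D S0) (dsh i D T0) :&: Y = W :|: [set i] -> W \subset Y -> 
  exists2 U, U \in symd_fam D & U :&: Y = W.
Proof.
move=> hS hT iS iT e sW.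
have [eS hS'] := dsh_in iS.
have iY : i \in Y.
  by have := (iffRL (setP _ _) e i); rewrite /= !inE eqxx orbT => /andP [].
exists (symd (if (i \in W) == (i \in T0) then S0 :\ i else S0) T0).
  by apply/imset2P; exists (if (i \in W) == (i \in T0) then S0 :\ i else S0) T0 => //; case: ifP.
apply/setP => y; have := (iffRL (setP _ _) e y); rewrite /= !in_setI !in_symd.
case: (eqVneq y i) => [->|ne].
  move=> _; rewrite iY andbT; rewrite eS in iS.
  by case: ifP; rewrite ?in_setD1 ?eqxx ?iS /=; case: (i \in W); case: (i \in T0).
rewrite in_setU in_set1 (negbTE ne) orbF !dsh_off // => <-.
by case: ifP; rewrite ?in_setD1 ?ne.
Qed.

Lemma sh_dcomp i D Y : shattered (symd_fam (dcomp i D)) Y -> shattered (symd_fam D) Y.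
Proof.
move/shatteredP => H; apply/shatteredP => W sW.
case: (boolP (i \in Y)) => iY.
  have sW' : W :|: [set i] \subset Y by rewrite subUset sW sub1set iY.
  have [U /imset2P [S' T' /imsetP [S0 hS0 ->] /imsetP [T0 hT0 ->] ->] eU] := H _ sW'.
  have : i \in symd (dsh i D S0) (dsh i D T0).
    by have := (iffRL (setP _ _) eU i); rewrite /= !inE eqxx orbT => /andP [].
  rewrite in_symd.
  case iS : (i \in dsh i D S0); case iT : (i \in dsh i D T0) => //= _.
    exact: (@core i D Y W S0 T0 hS0 hT0 iS (negbT iT) eU sW).
  by apply: (@core i D Y W T0 S0 hT0 hS0 iT (negbT iS) _ sW); rewrite symdC.
have [U /imset2P [S' T' /imsetP [S0 hS0 ->] /imsetP [T0 hT0 ->] ->] eU] := H W sW.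
exists (symd S0 T0); first by apply/imset2P; exists S0 T0.
rewrite -eU !symdI; congr symd; apply/setP => y; rewrite !inE;
  (case: (boolP (y \in Y)) => yY; rewrite ?andbF ?andbT //; rewrite dsh_off //;
   by apply: contraNneq iY => <-).
Qed.

Definition downc D := forall S, S \in D -> forall i, i \in S -> S :\ i \in D.

Lemma down_exists D : exists D', [/\ #|D'| = #|D|, downc D' &
  forall Y, shattered (symd_fam D') Y -> shattered (symd_fam D) Y].
Proof.
move: {-1}(wt D).+1 (ltnSn (wt D)) => w; elim: w D => // w IH D hw.
case: (boolP [forall S in D, forall i in S, S :\ i \in D]) => h.
  exists D; split => // S hS i iS.
  by move/forallP: h => /(_ S); rewrite hS /= => /forallP /(_ i); rewrite iS.
move/forallPn: h => [S]; rewrite negb_imply => /andP [hS /forallPn [i]].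
rewrite negb_imply => /andP [iS niS].
have [D' [c d s]] := IH (dcomp i D) (leq_trans (wt_dcomp hS iS niS) (hw : wt D < w.+1)).
exists D'; split => //; first by rewrite c card_dcomp.
by move=> Y /s /sh_dcomp.
Qed.

Lemma downc_sub D S U : downc D -> S \in D -> U \subset S -> U \in D.
Proof.
move=> dD; move: {-1}#|S :\: U| (erefl #|S :\: U|) => k.
elim: k S => [|k IH] S e hS sU.
  have : S :\: U == set0 by rewrite -cards_eq0 e.
  rewrite setD_eq0 => sSU; by rewrite (_ : U = S) // ; apply/eqP; rewrite eqEsubset sU.
have [x hx] : exists x, x \in S :\: U by apply/set0Pn; rewrite -card_gt0 e.
apply: (IH (S :\ x)).
- move: e; rewrite (cardsD1 x) hx add1n => -[<-]; apply: eq_card => y; rewrite !inE.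
  by case: (y \in S); case: (y \in U); case: (y == x).
- by apply: dD => //; move: hx; rewrite inE => /andP [].
apply/subsetP => y yU; rewrite !inE (subsetP sU) // andbT.
by apply: contraTneq yU => ->; move: hx; rewrite inE => /andP [].
Qed.

Lemma union_bound D d S U : downc D -> (forall Y, shattered (symd_fam D) Y -> #|Y| <= d) ->
  S \in D -> U \in D -> #|S :|: U| <= d.
Proof.
move=> dD hd hS hU; apply: hd; apply/shatteredP => W sW.
exists W; last by apply/setIidPl.
apply/imset2P; exists (W :&: (S :\: U)) (W :&: U).
- by apply: (downc_sub dD hS); rewrite subIset // subsetDl orbT.
- by apply: (downc_sub dD hU); rewrite subsetIr.
apply/setP => y; rewrite in_symd !inE.
have := subsetP sW y; rewrite !inE.
by case: (y \in W); case: (y \in S); case: (y \in U) => // /(_ isT).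
Qed.

End Down.
Section Kat.
Variable n : nat.
Implicit Types (E : {set {set 'I_n}}) (S U : {set 'I_n}).

Definition Rg m : {set 'I_n} := [set y : 'I_n | y < m].

Lemma card_Rg m : m <= n -> #|Rg m| = m.
Proof.
elim: m => [|m IH] h.
  by apply/eqP; rewrite cards_eq0; apply/eqP/setP => y; rewrite !inE.
have -> : Rg m.+1 = Ordinal h |: Rg m.
  by apply/setP => y; rewrite !inE ltnS leq_eqVlt -val_eqE.
by rewrite cardsU1 IH ?(ltnW h) // inE /= ltnn.
Qed.

Section Shift.
Variables (i x : 'I_n) (E : {set {set 'I_n}}).

Definition cnd S := [&& x \in S, i \notin S & S :\ x :|: [set i] \notin E].
Definition ush S := if cnd S then S :\ x :|: [set i] else S.
Definition ucomp := [set ush S | S in E].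

Lemma ush_inj : {in E &, injective ush}.
Proof.
move=> S U hS hU; rewrite /ush.
case: (boolP (cnd S)) => [/and3P [xS iS nS]|_];
case: (boolP (cnd U)) => [/and3P [xU iU nU]|_] //.
- move=> e; apply/setP => y; have := iffRL (setP _ _) e y; rewrite !inE.
  case: (eqVneq y x) => [->|_]; first by rewrite xS xU.
  case: (eqVneq y i) => [->|_]; first by rewrite (negbTE iS) (negbTE iU).
  by rewrite !orbF.
- by move=> e; move: nS; rewrite e hU.
- by move=> e; move: nU; rewrite -e hS.
Qed.

Lemma card_ucomp : #|ucomp| = #|E|.
Proof. exact/card_in_imset/ush_inj. Qed.

Lemma ucomp_sub (R : {set 'I_n}) : i \in R -> (forall S, S \in E -> S \subset R) ->
  forall S, S \in ucomp -> S \subset R.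
Proof.
move=> iR h _ /imsetP [S hS ->]; rewrite /ush; case: ifP => _; last exact: h.
by rewrite subUset sub1set iR andbT; apply: subset_trans (h _ hS); apply: subD1set.
Qed.

Lemma cardB S U : x \in S -> #|(S :|: U) :\ x :|: [set i]| <= #|S :|: U|.
Proof.
move=> xS; rewrite [#|S :|: U|](cardsD1 x) inE xS /= setUC cardsU1.
by case: (_ \notin _).
Qed.

Lemma ush_union d S U : (forall S U, S \in E -> U \in E -> #|S :|: U| <= d) ->
  S \in E -> U \in E -> cnd S -> #|ush S :|: ush U| <= d.
Proof.
move=> hd hS hU cS; have /and3P [xS iS nS] := cS.
rewrite {1}/ush cS.
have hB : ush U \subset (S :|: U) :\ x :|: [set i] -> #|S :\ x :|: [set i] :|: ush U| <= d.
  move=> sub; apply: (@leq_trans #|(S :|: U) :\ x :|: [set i]|); last by apply: leq_trans (cardB U xS) (hd _ _ hS hU).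
  apply: subset_leq_card; rewrite subUset sub andbT subUset subsetUr andbT.
  by apply/subsetP => y; rewrite !inE => /andP [-> ->].
move: hB; rewrite /ush; case: ifP => cU hB.
  apply: hB; apply/subsetP => y; rewrite !inE.
  by case: (y == i) => //=; case: (y == x); case: (y \in U) => //=; rewrite orbT.
case: (boolP (x \in U)) => xU; last first.
  apply: hB; apply/subsetP => y yU; rewrite !inE yU orbT andbT.
  by apply/orP; left; apply/eqP => eyx; move: xU; rewrite -eyx yU.
case: (boolP (i \in U)) => iU.
  apply: leq_trans _ (hd _ _ hS hU); apply: subset_leq_card.
  rewrite subUset subsetUr andbT subUset sub1set !inE iU orbT andbT.
  by apply: subset_trans (subD1set _ _) (subsetUl _ _).
have hU2 : U :\ x :|: [set i] \in E.
  by move: cU; rewrite /cnd xU iU /= => /negbT; rewrite negbK.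
apply: leq_trans _ (hd _ _ hS hU2); rewrite leq_eqVlt; apply/orP; left; apply/eqP.
apply: eq_card => y; rewrite !inE.
case: (eqVneq y x) => [->|nx]; first by rewrite xS xU orbT.
case: (eqVneq y i) => [->|ni] //=; by rewrite ?orbT ?orbF.
Qed.

Lemma ucomp_union d : (forall S U, S \in E -> U \in E -> #|S :|: U| <= d) ->
  forall S U, S \in ucomp -> U \in ucomp -> #|S :|: U| <= d.
Proof.
move=> hd _ _ /imsetP [S hS ->] /imsetP [U hU ->].
case cS : (cnd S); first exact: ush_union.
case cU : (cnd U); first by rewrite setUC; apply: ush_union.
by rewrite /ush cS cU; apply: hd.
Qed.

Definition mu E := #|[set S in E | x \in S]|.

Lemma mu_ucomp S0 : S0 \in E -> cnd S0 -> mu ucomp < mu E.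
Proof.
move=> h0 c0; rewrite /mu.
have -> : [set S in ucomp | x \in S] = ush @: [set S in E | x \in ush S].
  apply/setP => U; rewrite inE; apply/andP/imsetP => [[/imsetP [S hS ->] xS]|[S]].
    by exists S => //; rewrite inE hS.
  by rewrite inE => /andP [hS xS] ->; split => //; apply/imsetP; exists S.
rewrite card_in_imset; last by move=> S U; rewrite !inE => /andP [hS _] /andP [hU _]; apply: ush_inj.
apply: proper_card; rewrite properE; apply/andP; split.
  apply/subsetP => S; rewrite !inE => /andP [-> /=]; rewrite /ush; case: ifP => // /and3P [xS _ _] _; exact: xS.
apply/subsetPn; exists S0; first by rewrite inE h0; case/and3P: c0.
rewrite inE h0 /ush c0 !inE eqxx /=; case/and3P: c0 => xS iS _.
by apply: contraNneq iS => <-.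
Qed.

End Shift.

Definition stable (x : 'I_n) (R : {set 'I_n}) E := forall S, S \in E -> x \in S -> forall i, i \in R -> i \notin S ->
  S :\ x :|: [set i] \in E.

Lemma stab_exists (x : 'I_n) (R : {set 'I_n}) d E : (forall S, S \in E -> S \subset R) ->
  (forall S U, S \in E -> U \in E -> #|S :|: U| <= d) ->
  exists E', [/\ #|E'| = #|E|, forall S, S \in E' -> S \subset R,
     forall S U, S \in E' -> U \in E' -> #|S :|: U| <= d & stable x R E'].
Proof.
move: {-1}(mu x E).+1 (ltnSn (mu x E)) => w; elim: w E => // w IH E hw hR hd.
case: (boolP [exists S in E, exists i in R, cnd i x E S]) => h.
  move/existsP: h => [S /andP [hS /existsP [i /andP [iR c]]]].
  have [E' [c1 c2 c3 c4]] := IH (ucomp i x E)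
    (leq_trans (mu_ucomp hS c) (hw : mu x E < w.+1)) (ucomp_sub iR hR) (ucomp_union hd).
  by exists E'; split => //; rewrite c1 card_ucomp.
exists E; split => // S hS xS i iR iS; apply: contraNT h => nE.
by apply/existsP; exists S; rewrite hS /=; apply/existsP; exists i; rewrite iR /cnd xS iS nE.
Qed.

Variable K : nat -> nat -> nat.
Hypothesis Krec : forall k d, 2 <= d -> d < k -> K k.+1 d = K k d + K k (d - 2).
Hypothesis Ksmall : forall k d, d < 2 -> K k d <= K k.+1 d.
Hypothesis Kfull : forall k, K k.+1 k = 2 ^ k.

Lemma katona d m E : m <= n -> d < m -> (forall S, S \in E -> S \subset Rg m) ->
  (forall S U, S \in E -> U \in E -> #|S :|: U| <= d) -> #|E| <= K m d.
Proof.
elim: m d E => [|k IH] d E hm hd hR hU //.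
case: (eqVneq d k) => [edk|ndk].
  subst d; pose R := Rg k.+1; pose Ec := [set R :\: S | S in E].
  have inj : {in E &, injective (fun S => R :\: S)}.
    have kk : forall S, S \in E -> R :\: (R :\: S) = S.
      by move=> S hS; rewrite setDDr setDv set0U; apply/setIidPr; exact: hR.
    by move=> S U hS hU' /= e; rewrite -(kk S hS) e kk.
  have disj : E :&: Ec = set0.
    apply/eqP; rewrite -subset0; apply/subsetP => S; rewrite inE => /andP [hS /imsetP [T hT eS]].
    have eR : (R :\: T) :|: T = R.
      apply/setP => y; rewrite !inE; case: (boolP (y \in T)) => yT /=.
        by have := subsetP (hR T hT) y yT; rewrite inE => ->.
      by rewrite orbF.
    have := hU _ _ hS hT; rewrite eS eR card_Rg //.
    by rewrite ltnn.
  have sub : E :|: Ec \subset powerset R.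
    rewrite subUset; apply/andP; split; apply/subsetP => S; rewrite powersetE.
      exact: hR.
    by move=> /imsetP [T _ ->]; apply: subsetDl.
  have := subset_leq_card sub; rewrite card_powerset card_Rg // cardsU disj cards0 subn0.
  by rewrite card_in_imset // Kfull expnS addnn mul2n leq_double.
have hdk : d < k by move: hd ndk; rewrite ltnS leq_eqVlt => /orP [/eqP ->|]; rewrite ?eqxx.
have hk : k < n by [].
pose x := Ordinal hk.
have [E' [c1 c2 c3 c4]] := stab_exists x hR hU.
rewrite -c1.
pose B := [set S : {set 'I_n} | x \in S].
have hsplit : #|E'| = #|E' :\: B| + #|[set S :\ x | S in E' :&: B]|.
  rewrite card_in_imset; first by rewrite addnC cardsID.
  move=> S U; rewrite !inE => /andP [_ xS] /andP [_ xU] e; apply/setP => y.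
  move: (iffRL (setP _ _) e y); rewrite !inE.
  by case: (eqVneq y x) => [->|] //=; rewrite xS xU.
have lt_k : forall S y, S \in E' -> y \in S -> y != x -> y < k.
  move=> S y hS yS nyx; have := subsetP (c2 S hS) y yS; rewrite inE ltnS leq_eqVlt.
  case/orP => // /eqP e; case/eqP: nyx; exact: val_inj.
have h0 : #|E' :\: B| <= K k d.
  apply: IH => //; first exact: ltnW.
    move=> S; rewrite !inE => /andP [nxS hS]; apply/subsetP => y yS; rewrite inE.
    by apply: (lt_k S) => //; apply: contraNneq nxS => <-.
  by move=> S U; rewrite !inE => /andP [_ hS] /andP [_ hU']; apply: c3.
have E1sub : forall A, A \in [set S :\ x | S in E' :&: B] -> A \subset Rg k.
  move=> _ /imsetP [S hS ->]; move: hS; rewrite inE => /andP [hS _].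
  by apply/subsetP => y; rewrite !inE => /andP [nyx yS]; apply: (lt_k S).
have E1U : forall A C, A \in [set S :\ x | S in E' :&: B] -> C \in [set S :\ x | S in E' :&: B] ->
    #|A :|: C| + 2 <= d.
  move=> _ _ /imsetP [S hS ->] /imsetP [T hT ->].
  move: hS hT; rewrite !inE => /andP [hS xS] /andP [hT xT].
  have hST := c3 S T hS hT.
  have : ~~ (Rg k.+1 \subset S :|: T).
    apply/negP => sb; have := leq_trans (subset_leq_card sb) hST; rewrite card_Rg //; lia.
  move/subsetPn => [i iR]; rewrite inE negb_or => /andP [iS iT].
  have hT2 := c4 T hT xT i iR iT.
  have := c3 S _ hS hT2; apply: leq_trans.
  have ix : i != x by apply: contraNneq iS => ->.
  have -> : #|S :\ x :|: T :\ x| + 2 = #|i |: (x |: (S :\ x :|: T :\ x))|.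
    by rewrite cardsU1 cardsU1 !inE eqxx (negbTE ix) (negbTE iS) (negbTE iT) /= add1n add1n addn2.
  apply: subset_leq_card; apply/subsetP => y; rewrite !inE.
  case: (eqVneq y i) => [->|yi]; first by rewrite !orbT.
  case: (eqVneq y x) => [->|yx] /=; first by rewrite xS.
  by rewrite orbF.
case: (leqP 2 d) => d2.
  have h1 : #|[set S :\ x | S in E' :&: B]| <= K k (d - 2).
    apply: IH => //; [exact: ltnW | lia | ].
    by move=> A C hA hC; rewrite -(leq_add2r 2) subnK //; exact: E1U.
  by rewrite hsplit Krec //; apply: leq_add.
rewrite hsplit; have -> : [set S :\ x | S in E' :&: B] = set0.
  apply/eqP; rewrite -subset0; apply/subsetP => A hA.
  by have := E1U A A hA hA; lia.
by rewrite cards0 addn0; apply: leq_trans h0 (Ksmall _ d2).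
Qed.

End Kat.

Theorem theorem2 (n d r : nat) (A : {set {set 'I_n}}) :
  0 < d -> d < n -> r <= 1 -> d = r %[mod 2] ->
  VC (symd_fam A) <= d ->
  #|A| <= 2 ^ r * binom_le (n - r) d./2.
Proof.
move=> d0 dn r1 dr hVC.
have [D [c dn' s]] := down_exists A.
have hU : forall S U, S \in D -> U \in D -> #|S :|: U| <= d.
  move=> S U hS hU; apply: (union_bound dn') => // Y /s /shVC h; exact: leq_trans h hVC.
have hR : forall S, S \in D -> S \subset Rg n n.
  by move=> S _; apply/subsetP => y _; rewrite inE ltn_ord.
have := katona Krec Ksmall Kfull (leqnn n) dn hR hU.
rewrite c /K => h; apply: leq_trans h _.
move: dr; rewrite modn2; case: r r1 => [|[|]] // _ dr.
  have -> : odd d = false by move: dr; case: (odd d).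
  by rewrite subn0 mul1n.
have -> : odd d = true by move: dr; case: (odd d).
by rewrite subn1 expn1.
Qed.
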